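(* Let $F\in\Gamma_0^s(\mathbb{R}_+)$ and $a\in(0,1]$, and suppose that $D:=\hat F^a$ is a metric on $[0,+\infty)$. Then there exists $c>0$ such that $F(s)>c|s^a-1|^{1/a}$ for every $s\ge0$, $s\neq1$, and $D$ is a complete metric on $[0,+\infty)$.
   Context: $\Gamma_0(\mathbb{R}_+)$ is the set of functions $F:[0,\infty)\to[0,\infty]$ that are convex, lower semicontinuous, with $F(1)=0$. For $F\in\Gamma_0(\mathbb{R}_+)$: $\mathrm{rec}(F)(r)=\lim_{\alpha\to\infty}F(1+\alpha r)/\alpha$, $F'_\infty:=\mathrm{rec}(F)(1)$; the perspective function is $\hat F(r,t)=tF(r/t)$ for $t>0$, $\hat F(r,0)=\mathrm{rec}(F)(r)$; the reverse entropy is $R(s)=sF(1/s)$ for $s>0$, $R(0)=F'_\infty$. $\Gamma_0^s(\mathbb{R}_+)$ is the set of $F\in\Gamma_0(\mathbb{R}_+)$ with $F=R$; for such $F$, $\hat F$ is symmetric and $\hat F(1,t)=F(t)$. A metric on $[0,\infty)$ is a function $D:[0,\infty)^2\to[0,\infty)$ (finite-valued) with $D(x,y)=0\iff x=y$, symmetric, satisfying the triangle inequality. *)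

(* Defs.v *)
From Stdlib Require Import Reals Lra ClassicalEpsilon.
Open Scope R_scope.

(* Extended nonnegative reals [0, +oo] (values of F). *)
Inductive ERbar : Type := ER (x : R) | ERinf.

Definition er_le (x y : ERbar) : Prop :=
  match x, y with
  | _, ERinf => True
  | ERinf, ER _ => False
  | ER a, ER b => a <= b
  end.

Definition er_lt (x y : ERbar) : Prop :=
  match x, y with
  | ER _, ERinf => True
  | ERinf, _ => False
  | ER a, ER b => a < b
  end.

Definition er_add (x y : ERbar) : ERbar :=
  match x, y with
  | ER a, ER b => ER (a + b)
  | _, _ => ERinf
  end.

(* scalar multiplication by a nonnegative real, with 0 * oo = 0 *)
Definition er_scal (t : R) (x : ERbar) : ERbar :=
  match x with
  | ER a => ER (t * a)
  | ERinf => if Req_EM_T t 0 then ER 0 else ERinf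
  end.

Definition er_fin (x : ERbar) : Prop :=
  match x with ER _ => True | ERinf => False end.

Definition er_val (x : ERbar) : R :=
  match x with ER a => a | ERinf => 0 end.

(* F is in Gamma_0(R_+): [0,oo)-> [0,oo], convex, lsc, F(1)=0.
   Only the values of F on [0,oo) are relevant. *)
Definition Gamma0 (F : R -> ERbar) : Prop :=
  (forall x, 0 <= x -> er_le (ER 0) (F x)) /\
  (forall x y l, 0 <= x -> 0 <= y -> 0 <= l <= 1 ->
     er_le (F (l * x + (1 - l) * y))
           (er_add (er_scal l (F x)) (er_scal (1 - l) (F y)))) /\
  (forall x r, 0 <= x -> er_lt (ER r) (F x) ->
     exists d, 0 < d /\ forall y, 0 <= y -> Rabs (y - x) < d -> er_lt (ER r) (F y)) /\
  F 1 = ER 0.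

Definition er_lim_infty (g : R -> ERbar) (l : ERbar) : Prop :=
  match l with
  | ER L => forall eps, 0 < eps -> exists M, forall al, M < al ->
              exists v, g al = ER v /\ Rabs (v - L) < eps
  | ERinf => forall K, exists M, forall al, M < al -> er_lt (ER K) (g al)
  end.

(* rec(F)(r) = lim_{alpha -> oo} F(1 + alpha r) / alpha *)
Definition recF (F : R -> ERbar) (r : R) : ERbar :=
  epsilon (inhabits ERinf)
    (fun l => er_lim_infty (fun al => er_scal (/ al) (F (1 + al * r))) l).

Definition Finf' (F : R -> ERbar) : ERbar := recF F 1.

Definition hatF (F : R -> ERbar) (r t : R) : ERbar :=
  if Rlt_dec 0 t then er_scal t (F (r / t)) else recF F r.

Definition revF (F : R -> ERbar) (s : R) : ERbar :=
  if Rlt_dec 0 s then er_scal s (F (/ s)) else Finf' F.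

Definition Gamma0s (F : R -> ERbar) : Prop :=
  Gamma0 F /\ forall s, 0 <= s -> F s = revF F s.

(* x^a for x >= 0, with 0^a = 0 *)
Definition rpow (x a : R) : R := if Rle_dec x 0 then 0 else Rpower x a.

Definition is_metric_Rplus (D : R -> R -> R) : Prop :=
  (forall x y, 0 <= x -> 0 <= y -> 0 <= D x y) /\
  (forall x y, 0 <= x -> 0 <= y -> (D x y = 0 <-> x = y)) /\
  (forall x y, 0 <= x -> 0 <= y -> D x y = D y x) /\
  (forall x y z, 0 <= x -> 0 <= y -> 0 <= z -> D x z <= D x y + D y z).

Definition complete_Rplus (D : R -> R -> R) : Prop :=
  forall u : nat -> R, (forall n, 0 <= u n) ->
    (forall eps, 0 < eps -> exists N, forall m n, (N <= m)%nat -> (N <= n)%nat ->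
        D (u m) (u n) < eps) ->
    exists l, 0 <= l /\ forall eps, 0 < eps -> exists N, forall n, (N <= n)%nat ->
        D (u n) l < eps.

(* D := hatF^a, as a finite-valued function (meaningful when hatF is finite) *)
Definition Dfun (F : R -> ERbar) (a : R) (x y : R) : R := rpow (er_val (hatF F x y)) a.

(* Main.v *)
Require Import Defs.
From Stdlib Require Import Reals Lra Lia.
Open Scope R_scope.

Lemma rpow_pos_eq x a : 0 < x -> rpow x a = Rpower x a.
Proof. intros; unfold rpow; destruct (Rle_dec x 0); [lra|auto]. Qed.

Lemma rpow_le0 x a : x <= 0 -> rpow x a = 0.
Proof. intros; unfold rpow; destruct (Rle_dec x 0); [auto|lra]. Qed.

Lemma Rpower_pos x a : 0 < Rpower x a.
Proof. unfold Rpower; apply exp_pos. Qed.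

Lemma rpow_gt0 x a : 0 < x -> 0 < rpow x a.
Proof. intros; rewrite rpow_pos_eq; auto; apply Rpower_pos. Qed.

Lemma rpow_ge0 x a : 0 <= rpow x a.
Proof. unfold rpow; destruct (Rle_dec x 0); [lra|left; apply Rpower_pos]. Qed.

Lemma rpow_le x y a : 0 < a -> x <= y -> rpow x a <= rpow y a.
Proof.
  intros Ha H. destruct (Rle_dec x 0).
  - rewrite (rpow_le0 x); auto; apply rpow_ge0.
  - rewrite !rpow_pos_eq by lra. apply Rle_Rpower_l; lra.
Qed.

Lemma rpow_lt x y a : 0 < a -> 0 <= x -> x < y -> rpow x a < rpow y a.
Proof.
  intros Ha H0 H. destruct (Rle_dec x 0).
  - rewrite (rpow_le0 x); auto; apply rpow_gt0; lra.
  - rewrite !rpow_pos_eq by lra. apply Rlt_Rpower_l; lra.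
Qed.

Lemma rpow_mult x y a : 0 <= x -> 0 <= y -> rpow (x*y) a = rpow x a * rpow y a.
Proof.
  intros Hx Hy. destruct (Req_dec x 0) as [->|].
  - rewrite Rmult_0_l, (rpow_le0 0) by lra; ring.
  - destruct (Req_dec y 0) as [->|].
    + rewrite Rmult_0_r, (rpow_le0 0) by lra; ring.
    + rewrite !rpow_pos_eq by (try apply Rmult_lt_0_compat; lra).
      rewrite Rpower_mult_distr; auto; lra.
Qed.

Lemma rpow_inv x a : 0 <= x -> a <> 0 -> rpow (rpow x a) (/a) = x.
Proof.
  intros Hx Ha. destruct (Req_dec x 0) as [->|].
  - rewrite (rpow_le0 0 a) by lra. rewrite rpow_le0; lra.
  - rewrite (rpow_pos_eq x) by lra. rewrite rpow_pos_eq by apply Rpower_pos.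
    rewrite Rpower_mult. rewrite Rinv_r by auto. apply Rpower_1; lra.
Qed.

Lemma rpow_lt_eps x a e : 0 < a -> 0 <= x -> 0 < e -> x < rpow e (/a) -> rpow x a < e.
Proof.
  intros Ha Hx He H. rewrite <- (rpow_inv e (/a)) by (lra || (apply Rinv_neq_0_compat; lra)).
  rewrite Rinv_inv. apply rpow_lt; auto.
Qed.

Lemma rpow_eq1 s a : 0 < a -> 0 <= s -> rpow s a = 1 -> s = 1.
Proof.
  intros Ha Hs H. destruct (Req_dec s 0) as [->|].
  - rewrite rpow_le0 in H; lra.
  - rewrite rpow_pos_eq in H by lra. unfold Rpower in H.
    assert (a * ln s = 0). { rewrite <- (ln_exp (a * ln s)), H. apply ln_1. }
    assert (ln s = 0). { destruct (Rmult_integral _ _ H1); lra. }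
    rewrite <- (exp_ln s) by lra. rewrite H2. apply exp_0.
Qed.


Lemma lipp_pos p B w v : 1 <= p -> 0 < B -> 0 <= w <= v -> v <= B ->
  rpow v p - rpow w p <= p * Rpower B (p-1) * (v - w).
Proof.
  intros Hp HB Hw Hv.
  assert (HRB : forall c, 0 < c <= B -> Rpower c (p-1) <= Rpower B (p-1))
    by (intros; apply Rle_Rpower_l; lra).
  destruct (Req_dec w v) as [<-|Hne].
  { replace (w - w) with 0 by ring. rewrite Rmult_0_r; lra. }
  destruct (Req_dec w 0) as [->|Hw0].
  - rewrite (rpow_le0 0) by lra. rewrite rpow_pos_eq by lra.
    assert (Rpower v p = Rpower v (p-1) * v).
    { replace p with ((p-1)+1) at 1 by ring. rewrite Rpower_plus, Rpower_1 by lra. ring. }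
    rewrite H. assert (Rpower v (p-1) <= Rpower B (p-1)) by (apply HRB; lra).
    pose proof (Rpower_pos v (p-1)). pose proof (Rpower_pos B (p-1)).
    assert (Rpower v (p-1) * v <= Rpower B (p-1) * v) by (apply Rmult_le_compat_r; lra).
    assert (Rpower B (p-1) * v <= p * Rpower B (p-1) * (v - 0)).
    { replace (p * Rpower B (p-1) * (v - 0)) with (p * (Rpower B (p-1) * v)) by ring.
      assert (0 <= Rpower B (p-1) * v) by (apply Rmult_le_pos; lra).
      set (z := Rpower B (p-1) * v) in *. clearbody z. nra. }
    lra.
  - rewrite !rpow_pos_eq by lra.
    destruct (MVT_cor2 (fun x => Rpower x p) (fun x => p * Rpower x (p-1)) w v)
      as [c [Hc1 Hc2]]; [lra| |].
    { intros c Hc. apply derivable_pt_lim_power. lra. }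
    rewrite Hc1. apply Rmult_le_compat_r; [lra|].
    apply Rmult_le_compat_l; [lra|]. apply HRB; lra.
Qed.

Lemma lipp p B w v : 1 <= p -> 0 < B -> 0 <= w <= B -> 0 <= v <= B ->
  Rabs (rpow v p - rpow w p) <= p * Rpower B (p-1) * Rabs (v - w).
Proof.
  intros. assert (0 <= p * Rpower B (p-1)) by (pose proof (Rpower_pos B (p-1)); nra).
  destruct (Rle_dec w v).
  - assert (rpow w p <= rpow v p) by (apply rpow_le; lra).
    rewrite !Rabs_right by lra. apply lipp_pos; lra.
  - assert (rpow v p <= rpow w p) by (apply rpow_le; lra).
    rewrite (Rabs_left1 (v - w)) by lra. rewrite Rabs_left1 by lra.
    replace (- (rpow v p - rpow w p)) with (rpow w p - rpow v p) by ring.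
    replace (- (v - w)) with (w - v) by ring. apply lipp_pos; lra.
Qed.

Section Main.
Variable F : R -> ERbar.
Variable a : R.
Hypothesis HG : Gamma0s F.
Hypothesis Ha : 0 < a <= 1.
Hypothesis Hhat : forall x y, 0 <= x -> 0 <= y -> er_fin (hatF F x y).
Hypothesis HM : is_metric_Rplus (Dfun F a).

Let f x := er_val (F x).
Let D := Dfun F a.

Lemma Hfin x : 0 <= x -> F x = ER (f x) /\ 0 <= f x.
Proof.
  intros Hx. pose proof (Hhat x 1 Hx ltac:(lra)) as H. unfold hatF in H.
  destruct (Rlt_dec 0 1) as [_|]; [|lra].
  replace (x/1) with x in H by field. unfold f.
  destruct HG as [[H1 _] _]. specialize (H1 x Hx).
  destruct (F x) eqn:E; simpl in *.
  - split; auto.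
  - destruct (Req_EM_T 1 0); [lra|contradiction].
Qed.

Lemma Dpos x y : 0 <= x -> 0 < y -> D x y = rpow (y * f (x / y)) a.
Proof.
  intros Hx Hy. unfold D, Dfun, hatF. destruct (Rlt_dec 0 y); [|lra].
  assert (0 <= x / y) by (unfold Rdiv; apply Rmult_le_pos; [lra|left; apply Rinv_0_lt_compat; lra]).
  destruct (Hfin (x/y) H) as [E _]. rewrite E. reflexivity.
Qed.

Let P := rpow (f 0) a.

Lemma rpow1 : rpow 1 a = 1.
Proof. rewrite rpow_pos_eq by lra. unfold Rpower. rewrite ln_1, Rmult_0_r. apply exp_0. Qed.

Lemma HD0 s : 0 <= s -> D 0 s = rpow s a * P.
Proof.
  intros Hs. destruct (Req_dec s 0) as [->|].
  - destruct HM as [_ [H2 _]]. unfold D; rewrite (proj2 (H2 0 0 ltac:(lra) ltac:(lra)) eq_refl).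
    rewrite (rpow_le0 0) by lra. ring.
  - rewrite Dpos by lra. replace (0 / s) with 0 by (field; auto).
    unfold P. apply rpow_mult; [lra|]. apply (proj2 (Hfin 0 ltac:(lra))).
Qed.

Lemma HD1 s : 0 <= s -> D s 1 = rpow (f s) a.
Proof. intros. rewrite Dpos by lra. replace (s/1) with s by field. rewrite Rmult_1_l. auto. Qed.

Lemma HP : 0 < P.
Proof.
  pose proof (HD0 1 ltac:(lra)) as H. rewrite rpow1, Rmult_1_l in H.
  destruct HM as [_ [H2 _]]. unfold P in *. pose proof (rpow_ge0 (f 0) a).
  destruct (Req_dec (rpow (f 0) a) 0); [|lra].
  assert (0 = 1) by (apply (H2 0 1); try lra; unfold D in H; lra). lra.
Qed.

Lemma Hf0 : 0 < f 0.
Proof.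
  pose proof HP. unfold P in H. destruct (Rle_dec (f 0) 0); [|lra].
  rewrite rpow_le0 in H; lra.
Qed.

Lemma LB x y : 0 <= x -> 0 <= y -> P * Rabs (rpow x a - rpow y a) <= D x y.
Proof.
  intros Hx Hy. destruct HM as [_ [_ [Hs Ht]]].
  pose proof (Ht 0 y x ltac:(lra) Hy Hx). pose proof (Ht 0 x y ltac:(lra) Hx Hy).
  pose proof (Hs x y Hx Hy).
  rewrite !HD0 in * by lra. pose proof HP.
  rewrite <- (Rabs_pos_eq P) by lra. rewrite <- Rabs_mult. apply Rabs_le.
  set (q1 := rpow x a * P) in *. set (q2 := rpow y a * P) in *.
  replace (P * (rpow x a - rpow y a)) with (q1 - q2) by (unfold q1, q2; ring).
  clearbody q1 q2. unfold D in *. lra.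
Qed.

Lemma HK t : 0 <= t <= 2 -> f t <= (f 0 + f 2) * Rabs (t - 1).
Proof.
  intros Ht. destruct HG as [[_ [Hc _]] _]. destruct HG as [[_ [_ [_ H1]]] _].
  destruct (Hfin 0 ltac:(lra)) as [E0 P0]. destruct (Hfin 2 ltac:(lra)) as [E2 P2].
  destruct (Hfin t ltac:(lra)) as [Et Pt].
  destruct (Rle_dec t 1).
  - pose proof (Hc 0 1 (1-t) ltac:(lra) ltac:(lra) ltac:(lra)) as H.
    replace ((1 - t) * 0 + (1 - (1 - t)) * 1) with t in H by ring.
    rewrite Et, E0, H1 in H. simpl in H.
    rewrite Rabs_left1 by lra.
    assert (0 <= (1-t) * f 2) by (apply Rmult_le_pos; lra).
    replace ((f 0 + f 2) * - (t - 1)) with ((1-t) * f 0 + (1-t) * f 2) by ring.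
    set (z1 := (1-t) * f 0) in *. set (z2 := (1-t) * f 2) in *. clearbody z1 z2. lra.
  - pose proof (Hc 2 1 (t-1) ltac:(lra) ltac:(lra) ltac:(lra)) as H.
    replace ((t - 1) * 2 + (1 - (t - 1)) * 1) with t in H by ring.
    rewrite Et, E2, H1 in H. simpl in H.
    rewrite Rabs_right by lra.
    assert (0 <= (t-1) * f 0) by (apply Rmult_le_pos; lra).
    replace ((f 0 + f 2) * (t - 1)) with ((t-1) * f 0 + (t-1) * f 2) by ring.
    set (z1 := (t-1) * f 0) in *. set (z2 := (t-1) * f 2) in *. clearbody z1 z2. lra.
Qed.


Lemma part1 : exists c, 0 < c /\ forall s, 0 <= s -> s <> 1 ->
      er_lt (ER (c * rpow (Rabs (rpow s a - 1)) (/ a))) (F s).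
Proof.
  pose proof Hf0. pose proof HP.
  exists (f 0 / 2). split; [lra|]. intros s Hs Hs1.
  destruct (Hfin s Hs) as [E Ps]. rewrite E. simpl.
  set (q := Rabs (rpow s a - 1)).
  assert (Hq : 0 < q).
  { unfold q. apply Rabs_pos_lt. intro. apply Hs1. apply (rpow_eq1 s a); lra. }
  pose proof (LB s 1 Hs ltac:(lra)) as HL. rewrite rpow1, HD1 in HL by lra. fold q in HL.
  assert (Hai : 0 < / a) by (apply Rinv_0_lt_compat; lra).
  assert (H2 : rpow (P * q) (/a) <= rpow (rpow (f s) a) (/a)) by (apply rpow_le; lra).
  rewrite rpow_inv in H2 by lra. rewrite rpow_mult in H2 by lra.
  unfold P in H2. rewrite rpow_inv in H2 by lra.
  pose proof (rpow_gt0 q (/a) Hq).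
  assert (f 0 / 2 * rpow q (/a) < f 0 * rpow q (/a)).
  { apply Rmult_lt_compat_r; lra. }
  lra.
Qed.

Lemma part2 : complete_Rplus (Dfun F a).
Proof.
  intros u Hu Hc.
  pose proof HP as HP. pose proof Hf0 as Hf0.
  set (v := fun n => rpow (u n) a).
  assert (Hvc : Cauchy_crit v).
  { intros eps He. destruct (Hc (eps * P)) as [N HN]; [apply Rmult_lt_0_compat; lra|].
    exists N. intros n m Hn Hm. unfold Rdist, v.
    pose proof (LB (u n) (u m) (Hu n) (Hu m)). specialize (HN n m Hn Hm).
    unfold D in *.
    apply Rmult_lt_reg_l with P; [lra|].
    set (z := Rabs (rpow (u n) a - rpow (u m) a)) in *. clearbody z.
    rewrite (Rmult_comm P eps). lra. }
  destruct (R_complete v Hvc) as [L HL].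
  assert (HL0 : 0 <= L).
  { destruct (Rle_dec 0 L); auto. destruct (HL (-L)) as [N HN]; [lra|].
    specialize (HN N (le_n N)). unfold Rdist, v in HN.
    apply Rabs_def2 in HN. pose proof (rpow_ge0 (u N) a). lra. }
  assert (Hai : 0 < / a) by (apply Rinv_0_lt_compat; lra).
  assert (Hu' : forall n, u n = rpow (v n) (/a)).
  { intros n. unfold v. rewrite rpow_inv; auto; lra. }
  destruct (Req_dec L 0) as [HL0'|HLp].
  - exists 0. split; [lra|]. intros eps He.
    destruct (HL (eps / P)) as [N HN]; [apply Rdiv_lt_0_compat; lra|].
    exists N. intros n Hn. specialize (HN n Hn). unfold Rdist in HN.
    rewrite HL0', Rminus_0_r in HN.
    destruct HM as [_ [_ [Hs _]]]. rewrite Hs by (auto; lra).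
    pose proof (HD0 (u n) (Hu n)) as E. unfold D in E. rewrite E.
    fold (v n). pose proof (rpow_ge0 (u n) a). fold (v n) in H.
    rewrite Rabs_right in HN by lra.
    apply Rmult_lt_compat_r with (r := P) in HN; [|lra].
    unfold Rdiv in HN. rewrite Rmult_assoc, Rinv_l, Rmult_1_r in HN by lra. lra.
  - set (p := / a).
    assert (Hp : 1 <= p).
    { unfold p. rewrite <- Rinv_1. apply Rinv_le_contravar; lra. }
    set (l := rpow L p).
    assert (Hl : 0 < l) by (apply rpow_gt0; lra).
    assert (HlL : l = rpow L p) by reflexivity.
    set (B := L + 1).
    destruct (HL 1) as [N1 HN1]; [lra|].
    set (C := p * Rpower B (p-1)).
    assert (HC : 0 < C) by (unfold C; pose proof (Rpower_pos B (p-1)); apply Rmult_lt_0_compat; lra).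
    assert (Hun : forall n, (n >= N1)%nat -> Rabs (u n - l) <= C * Rabs (v n - L)).
    { intros n Hn. specialize (HN1 n Hn). unfold Rdist in HN1. apply Rabs_def2 in HN1.
      rewrite Hu'. unfold l, C. apply lipp; unfold B; try lra.
      split; [apply rpow_ge0|]. unfold v in *. lra. }
    set (K := f 0 + f 2).
    assert (HK0 : 0 <= K) by (unfold K; pose proof (proj2 (Hfin 2 ltac:(lra))); lra).
    exists l. split; [lra|]. intros eps He.
    assert (He' : 0 < rpow eps p) by (apply rpow_gt0; lra).
    set (d := Rmin l (rpow eps p / (K + 1))).
    assert (Hd : 0 < d) by (unfold d; apply Rmin_glb_lt; [lra|apply Rdiv_lt_0_compat; lra]).
    destruct (HL (d / C)) as [N2 HN2]; [apply Rdiv_lt_0_compat; lra|].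
    exists (Nat.max N1 N2). intros n Hn.
    assert (Hn1 : (n >= N1)%nat) by lia. assert (Hn2 : (n >= N2)%nat) by lia.
    specialize (HN2 n Hn2). unfold Rdist in HN2.
    assert (Hd1 : Rabs (u n - l) < d).
    { pose proof (Hun n Hn1).
      assert (C * Rabs (v n - L) < C * (d / C)) by (apply Rmult_lt_compat_l; lra).
      replace (C * (d / C)) with d in H0 by (field; lra). lra. }
    assert (Hdl : d <= l) by apply Rmin_l.
    assert (Hde : d <= rpow eps p / (K + 1)) by apply Rmin_r.
    pose proof (Dpos (u n) l (Hu n) Hl) as E. unfold D in E. rewrite E.
    apply Rabs_def2 in Hd1 as Hd2.
    set (t := u n / l).
    assert (Ht : 0 <= t <= 2).
    { unfold t. split.
      - unfold Rdiv. apply Rmult_le_pos; [apply Hu|left; apply Rinv_0_lt_compat; lra].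
      - apply Rmult_le_reg_r with l; [lra|]. unfold Rdiv. rewrite Rmult_assoc, Rinv_l by lra. lra. }
    pose proof (HK t Ht) as Hft.
    assert (Hid : l * Rabs (t - 1) = Rabs (u n - l)).
    { rewrite <- (Rabs_pos_eq l) at 1 by lra. rewrite <- Rabs_mult. f_equal. unfold t. field. lra. }
    pose proof (proj2 (Hfin t ltac:(lra))) as Hft0.
    apply rpow_lt_eps; [lra| apply Rmult_le_pos; lra |lra|].
    fold p.
    assert (l * f t <= l * (K * Rabs (t - 1))) by (apply Rmult_le_compat_l; [lra|exact Hft]).
    replace (l * (K * Rabs (t - 1))) with (K * (l * Rabs (t - 1))) in H by ring.
    rewrite Hid in H.
    assert (K * Rabs (u n - l) <= (K+1) * Rabs (u n - l)) by (pose proof (Rabs_pos (u n - l)); nra).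
    assert ((K+1) * Rabs (u n - l) < (K+1) * (rpow eps p / (K + 1))) by (apply Rmult_lt_compat_l; lra).
    replace ((K+1) * (rpow eps p / (K + 1))) with (rpow eps p) in H1 by (field; lra).
    lra.
Qed.

End Main.

Theorem mainTheorem6 (F : R -> ERbar) (a : R) :
  Gamma0s F -> 0 < a <= 1 ->
  (forall x y, 0 <= x -> 0 <= y -> er_fin (hatF F x y)) ->
  is_metric_Rplus (Dfun F a) ->
  (exists c, 0 < c /\ forall s, 0 <= s -> s <> 1 ->
      er_lt (ER (c * rpow (Rabs (rpow s a - 1)) (/ a))) (F s)) /\
  complete_Rplus (Dfun F a).
Proof.
  intros. split; [eapply part1 | eapply part2]; eauto.
Qed.
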